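(* Define $\phi:\mathrm{PSL}(2,\mathbb{Z})\to\mathbb{C}$ by $\phi(\gamma)=(\mathcal{R}(\gamma;z_q)+2\lambda^2)\,f(\gamma z_q)$, where $f(w)=\frac{i(w-z_q)}{w-\overline{z_q}}$. Then every point in the image of $\phi$ has exactly $|\mathrm{Stab}_{\mathrm{PSL}(2,\mathbb{Z})}(z_q)|$ preimages, and this number equals $\frac12|\mathcal{O}_K^\times|$.
   Context: Let $q\in\{3,4,7,8,11,19,43,67,163\}$, $K$ the imaginary quadratic field of discriminant $-q$ (class number one), $\mathcal{O}_K$ its ring of integers, $\mathcal{O}_K^\times$ its unit group. Let $z_q=\mu+i\lambda$ with $\mu=0$ if $q\in\{4,8\}$, $\mu=1/2$ otherwise, $\lambda=\sqrt{q}/2$. $\mathbb{H}$ is the upper half-plane with hyperbolic distance $\rho$, $\cosh\rho(z,w)=1+\frac{|z-w|^2}{2\,\mathrm{Im}(z)\mathrm{Im}(w)}$, and $\mathrm{PSL}(2,\mathbb{Z})$ acts by Möbius transformations; $\mathcal{R}(\gamma;z_q)=2\lambda^2\cosh\rho(z_q,\gamma z_q)$. *)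

(* Defs.v *)
From mathcomp Require Import all_boot all_order all_algebra.
From mathcomp Require Import complex Rstruct.
From Stdlib Require Rdefinitions.
Set Implicit Arguments. Unset Strict Implicit. Unset Printing Implicit Defensive.
Import Order.TTheory GRing.Theory Num.Theory.
Local Open Scope ring_scope.

Notation RR := Rdefinitions.R.
Notation CC := (RR[i]).

(* the nine class-number-one discriminants -q *)
Definition admissible_q (q : nat) : bool :=
  q \in [:: 3; 4; 7; 8; 11; 19; 43; 67; 163]%N.

Definition mu (q : nat) : RR := if q \in [:: 4; 8]%N then 0 else 2^-1.
Definition lambda (q : nat) : RR := Num.sqrt (q%:R) / 2.
Definition zq (q : nat) : CC := Complex (mu q) (lambda q).

(* PSL(2,Z): each class {M, -M} of SL(2,Z) is represented by the unique
   matrix (a b; c d) with ad - bc = 1 and (c > 0, or c = 0 and d > 0). *)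
Definition psl_rep (m : int * int * int * int) : bool :=
  let: (a, b, c, d) := m in
  (a * d - b * c == 1) && ((0 < c) || ((c == 0) && (0 < d))).
Definition PSL2Z := {m : int * int * int * int | psl_rep m}.

Definition mob (g : PSL2Z) (z : CC) : CC :=
  let: (a, b, c, d) := val g in
  (a%:~R * z + b%:~R) / (c%:~R * z + d%:~R).

Definition abs2 (z : CC) : RR := complex.Re z ^+ 2 + complex.Im z ^+ 2.
Definition cosh_rho (z w : CC) : RR :=
  1 + abs2 (z - w) / (2 * complex.Im z * complex.Im w).

Definition Rq (q : nat) (g : PSL2Z) : RR :=
  2 * lambda q ^+ 2 * cosh_rho (zq q) (mob g (zq q)).

Definition fq (q : nat) (w : CC) : CC :=
  'i%C * (w - zq q) / (w - conjc (zq q)).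

Definition phi (q : nat) (g : PSL2Z) : CC :=
  ((Rq q g + 2 * lambda q ^+ 2)%:C)%C * fq q (mob g (zq q)).

Definition Stab (q : nat) (g : PSL2Z) : Prop := mob g (zq q) = zq q.

(* K = Q(sqrt(-q)) = Q(z_q) inside C, O_K its ring of integers
   (elements of K that are roots of a monic integer polynomial),
   O_K^x its unit group. *)
Definition inK (q : nat) (x : CC) : Prop :=
  exists a b : rat, x = ratr a + ratr b * zq q.
Definition alg_integer (x : CC) : Prop :=
  exists p : {poly int}, p \is monic /\ root (map_poly (fun z : int => z%:~R : CC) p) x.
Definition OK (q : nat) (x : CC) : Prop := inK q x /\ alg_integer x.
Definition OK_unit (q : nat) (x : CC) : Prop :=
  OK q x /\ x != 0 /\ OK q x^-1.

Definition has_card (T : eqType) (P : T -> Prop) (n : nat) : Prop :=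
  exists s : seq T, uniq s /\ (forall x, x \in s <-> P x) /\ size s = n.

(* Main.v *)
Require Import Defs.
From mathcomp Require Import all_boot all_order all_algebra.
From mathcomp Require Import complex Rstruct.
From mathcomp Require Import ring lra zify.
Set Implicit Arguments. Unset Strict Implicit. Unset Printing Implicit Defensive.
Import Order.TTheory GRing.Theory Num.Theory.
Local Open Scope ring_scope.

Lemma CaddE (u v : CC) : u + v = Complex (complex.Re u + complex.Re v) (complex.Im u + complex.Im v). Proof. by case: u; case: v. Qed.
Lemma CmulE (u v : CC) : u * v = Complex (complex.Re u * complex.Re v - complex.Im u * complex.Im v) (complex.Re u * complex.Im v + complex.Im u * complex.Re v). Proof. by case: u; case: v. Qed.
Lemma CoppE (u : CC) : - u = Complex (- complex.Re u) (- complex.Im u). Proof. by case: u. Qed.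
Lemma CinvE (u : CC) : u^-1 = Complex (complex.Re u/(complex.Re u^+2+complex.Im u^+2)) (-(complex.Im u/(complex.Re u^+2+complex.Im u^+2))). Proof. by case: u. Qed.
Lemma intrC (k : int) : (k%:~R : CC) = Complex (k%:~R) 0.
Proof. by rewrite -(rmorph_int (real_complex RR)). Qed.
Lemma ratrC (k : rat) : (ratr k : CC) = Complex (ratr k) 0.
Proof. by rewrite -(fmorph_rat (real_complex RR)). Qed.
Lemma Re_intr (k : int) : complex.Re (k%:~R : CC) = k%:~R. Proof. by rewrite intrC. Qed.
Lemma Im_intr (k : int) : complex.Im (k%:~R : CC) = 0. Proof. by rewrite intrC. Qed.
Lemma Re_ratr (k : rat) : complex.Re (ratr k : CC) = ratr k. Proof. by rewrite ratrC. Qed.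
Lemma Im_ratr (k : rat) : complex.Im (ratr k : CC) = 0. Proof. by rewrite ratrC. Qed.
Lemma C_eta (u : CC) : u = Complex (complex.Re u) (complex.Im u). Proof. by case: u. Qed.

Ltac qcase hq := move: hq; rewrite /admissible_q !inE;
  do ![case/orP=> [/eqP->|]]; last move/eqP->.

Definition tq (q : nat) : int := if q \in [:: 4; 8]%N then 0 else 1.
Definition Nq (q : nat) : int := Posz ((q + (if q \in [:: 4; 8]%N then 0 else 1)) %/ 4)%N.

Lemma tq_Nq q : admissible_q q ->
  (tq q = 0 \/ tq q = 1) /\ 4 * Nq q = q%:Z + tq q /\ (3 <= q)%N.
Proof. move=> hq; qcase hq; by rewrite /tq /Nq /=; split; auto. Qed.

Lemma tq2 q : admissible_q q -> tq q * tq q = tq q.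
Proof. by case/tq_Nq=> [[->|->] _]. Qed.

Lemma mu_t q : admissible_q q -> mu q = (tq q)%:~R / 2.
Proof. move=> hq; qcase hq; by rewrite /mu /tq /= ?mul0r ?mul1r. Qed.

Lemma lambda2 q : lambda q ^+ 2 = q%:R / 4.
Proof. by rewrite /lambda expr_div_n sqr_sqrtr ?ler0n //; congr (_ / _); rewrite -natrX. Qed.

Lemma lambda_gt0 q : admissible_q q -> 0 < lambda q.
Proof.
move=> hq; have [_ [_ h3]] := tq_Nq hq.
by rewrite /lambda divr_gt0 // sqrtr_gt0 ltr0n; apply: leq_trans h3.
Qed.

Lemma Re_zq q : complex.Re (zq q) = mu q. Proof. by []. Qed.
Lemma Im_zq q : complex.Im (zq q) = lambda q. Proof. by []. Qed.

Definition mat := (int * int * int * int)%type.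
Definition mobm (m : mat) (z : CC) : CC :=
  let: (a, b, c, d) := m in (a%:~R * z + b%:~R) / (c%:~R * z + d%:~R).
Lemma mobE g z : mob g z = mobm (val g) z. Proof. by []. Qed.
Definition detm (m : mat) : int := let: (a, b, c, d) := m in a * d - b * c.
Definition mulm (m1 m2 : mat) : mat :=
  let: (a1, b1, c1, d1) := m1 in let: (a2, b2, c2, d2) := m2 in
  (a1 * a2 + b1 * c2, a1 * b2 + b1 * d2, c1 * a2 + d1 * c2, c1 * b2 + d1 * d2).
Definition adjm (m : mat) : mat := let: (a, b, c, d) := m in (d, - b, - c, a).
Definition negm (m : mat) : mat := let: (a, b, c, d) := m in (- a, - b, - c, - d).
Definition normm (m : mat) : mat :=
  let: (a, b, c, d) := m in if (0 < c) || ((c == 0) && (0 < d)) then m else negm m.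
Definition idm : mat := (1, 0, 0, 1).

Lemma mobm_formula (a b c d : int) (x y : RR) :
  let A : RR := a%:~R in let B : RR := b%:~R in let C : RR := c%:~R in let D : RR := d%:~R in
  let n2 := (C * x + D) ^+ 2 + (C * y) ^+ 2 in
  mobm (a, b, c, d) (Complex x y) =
  Complex (((A * x + B) * (C * x + D) + A * C * y ^+ 2) / n2) ((A * D - B * C) * y / n2).
Proof.
move=> A B C D n2.
rewrite /mobm !intrC.
transitivity (Complex ((A*x - 0*y + B)*((C*x - 0*y + D)/((C*x - 0*y + D)^+2 + (C*y + 0*x + 0)^+2)) - (A*y + 0*x + 0)*(-((C*y + 0*x + 0)/((C*x - 0*y + D)^+2 + (C*y + 0*x + 0)^+2)))) ((A*x - 0*y + B)*(-((C*y + 0*x + 0)/((C*x - 0*y + D)^+2 + (C*y + 0*x + 0)^+2))) + (A*y + 0*x + 0)*((C*x - 0*y + D)/((C*x - 0*y + D)^+2 + (C*y + 0*x + 0)^+2)))).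
  reflexivity.
congr Complex; rewrite /n2 /A /B /C /D !mul0r !subr0 !addr0;
  move: (a%:~R) (b%:~R) (c%:~R) (d%:~R) => a1 b1 c1 d1 /=; ring.
Qed.

Lemma cd_nz (m : mat) : detm m = 1 -> let: (a, b, c, d) := m in (c != 0) || (d != 0).
Proof. case: m => [[[a b] c] d] /=; lia. Qed.

Lemma den_nz (c d : int) (z : CC) : complex.Im z != 0 -> (c != 0) || (d != 0) ->
  c%:~R * z + d%:~R != 0.
Proof.
move=> hz hcd; apply/negP => /eqP.
rewrite CmulE CaddE !Re_intr !Im_intr => e.
have e2 := congr1 (@complex.Im RR) e; have e1 := congr1 (@complex.Re RR) e; simpl in e1, e2.
move: e2; rewrite mul0r !addr0 => /eqP; rewrite mulf_eq0 intr_eq0 (negbTE hz) orbF => /eqP c0.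
move: e1; rewrite c0 !mul0r subr0 add0r => /eqP; rewrite intr_eq0 => /eqP d0.
by move: hcd; rewrite c0 d0.
Qed.

Lemma sqr_pos (x : RR) : x != 0 -> 0 < x ^+ 2.
Proof. by move=> h; rewrite lt0r sqrf_eq0 h sqr_ge0. Qed.

Lemma Im_mobm (m : mat) (z : CC) : 0 < complex.Im z -> detm m = 1 ->
  0 < complex.Im (mobm m z).
Proof.
case: m => [[[a b] c] d] hz hdet; rewrite (C_eta z) mobm_formula /=.
have hcd := cd_nz hdet; simpl in hcd.
have -> : (a%:~R * d%:~R - b%:~R * c%:~R : RR) = 1.
  by rewrite -!intrM -intrB; move: hdet => /= ->.
rewrite mul1r divr_gt0 //.
case: (c =P 0) => [c0|/eqP c0].
  move: hcd; rewrite c0 /= => d0.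
  by rewrite !mul0r add0r expr0n /= addr0 sqr_pos // intr_eq0.
have h1 : 0 < (c%:~R * complex.Im z) ^+ 2 by rewrite sqr_pos // mulf_neq0 ?intr_eq0 // gt_eqF.
have h2 := sqr_ge0 (c%:~R * complex.Re z + d%:~R : RR).
lra.
Qed.

Lemma mobm_comp (m1 m2 : mat) (z : CC) : 0 < complex.Im z -> detm m1 = 1 -> detm m2 = 1 ->
  mobm (mulm m1 m2) z = mobm m1 (mobm m2 z).
Proof.
move=> hz h1 h2.
have hw := Im_mobm hz h2.
have n1 := cd_nz h1; have n2 := cd_nz h2.
move: h1 h2 hw n1 n2; case: m1 => [[[a1 b1] c1] d1]; case: m2 => [[[a2 b2] c2] d2] h1 h2 hw n1 n2.
have e2 := den_nz (lt0r_neq0 hz) n2.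
have e1 := den_nz (lt0r_neq0 hw) n1.
move: hw e1; rewrite /mulm /mobm !intrD !intrM.
move: (a1%:~R) (b1%:~R) (c1%:~R) (d1%:~R) (a2%:~R) (b2%:~R) (c2%:~R) (d2%:~R) e2 => A1 B1 C1 D1 A2 B2 C2 D2 e2 _ e1.
set w := (A2 * z + B2) / (C2 * z + D2) in e1 *.
have eD : (C1 * A2 + D1 * C2) * z + (C1 * B2 + D1 * D2) = (C1 * w + D1) * (C2 * z + D2).
  by rewrite /w; field.
have eN : (A1 * A2 + B1 * C2) * z + (A1 * B2 + B1 * D2) = (A1 * w + B1) * (C2 * z + D2).
  by rewrite /w; field.
rewrite eD eN; field; by rewrite e1 e2.
Qed.

Lemma mobm_neg (m : mat) (z : CC) : mobm (negm m) z = mobm m z.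
Proof.
case: m => [[[a b] c] d]; rewrite /mobm /negm !intrN !mulNr -!opprD.
by rewrite invrN mulrNN.
Qed.

Lemma mobm_id (z : CC) : mobm idm z = z.
Proof. by rewrite /mobm /idm mul1r mul0r add0r addr0 divr1. Qed.

Lemma matmA m1 m2 m3 : mulm (mulm m1 m2) m3 = mulm m1 (mulm m2 m3).
Proof.
case: m1 => [[[a1 b1] c1] d1]; case: m2 => [[[a2 b2] c2] d2]; case: m3 => [[[a3 b3] c3] d3] /=.
congr (_, _, _, _); ring.
Qed.

Lemma mul_adjm_l m : detm m = 1 -> mulm (adjm m) m = idm.
Proof. case: m => [[[a b] c] d] /= h; rewrite /idm; congr (_, _, _, _); lia. Qed.

Lemma mul_adjm_r m : detm m = 1 -> mulm m (adjm m) = idm.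
Proof. case: m => [[[a b] c] d] /= h; rewrite /idm; congr (_, _, _, _); lia. Qed.

Lemma matm1 m : mulm idm m = m.
Proof. case: m => [[[a b] c] d] /=; congr (_, _, _, _); lia. Qed.

Lemma matmN m s : mulm m (negm s) = negm (mulm m s).
Proof. case: m => [[[a b] c] d]; case: s => [[[a2 b2] c2] d2] /=; congr (_, _, _, _); lia. Qed.

Lemma detmM m1 m2 : detm (mulm m1 m2) = detm m1 * detm m2.
Proof. case: m1 => [[[a1 b1] c1] d1]; case: m2 => [[[a2 b2] c2] d2] /=; ring. Qed.

Lemma detm_adj m : detm (adjm m) = detm m.
Proof. case: m => [[[a b] c] d] /=; ring. Qed.

Lemma detmN m : detm (negm m) = detm m.
Proof. case: m => [[[a b] c] d] /=; ring. Qed.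

Lemma negmK m : negm (negm m) = m.
Proof. case: m => [[[a b] c] d] /=; by rewrite !opprK. Qed.

Lemma psl_det m : psl_rep m -> detm m = 1.
Proof. case: m => [[[a b] c] d] /= /andP[/eqP -> _] //. Qed.

Lemma normm_psl m : detm m = 1 -> psl_rep (normm m).
Proof.
case: m => [[[a b] c] d] /= h.
case: ifP => hc /=; first by rewrite h eqxx.
apply/andP; split; first by apply/eqP; lia.
have := cd_nz (m := (a, b, c, d)) h; move/negbT: hc => /=; lia.
Qed.

Lemma normm_id m : psl_rep m -> normm m = m.
Proof. case: m => [[[a b] c] d] /= /andP[_ ->] //. Qed.

Lemma normm_cases m : normm m = m \/ normm m = negm m.
Proof. case: m => [[[a b] c] d] /=; case: ifP; auto. Qed.

Lemma normmN m : detm m = 1 -> normm (negm m) = normm m.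
Proof.
case: m => [[[a b] c] d] /= h.
have := cd_nz (m := (a, b, c, d)) h => /= hcd.
case: ifP => h1; case: ifP => h2; rewrite ?opprK //; exfalso.
  by move: h1 h2 hcd; lia.
by move/negbT: h1; move/negbT: h2; move: hcd; lia.
Qed.

Lemma mob_normm m z : mobm (normm m) z = mobm m z.
Proof. by case: (normm_cases m) => ->; rewrite ?mobm_neg. Qed.

Lemma stab_real (A B C D x y Q T : RR) : y != 0 -> x = T / 2 -> y ^+ 2 = Q / 4 ->
  (T = 0 \/ T = 1) ->
  (A * x + B = x * (C * x + D) - y * (C * y) /\ A * y = x * (C * y) + y * (C * x + D))
  <-> (A = T * C + D /\ 4 * B + C * (Q + T) = 0).
Proof.
move=> hy hx hy2 hT.
have eIm : A * y - (x * (C * y) + y * (C * x + D)) = y * (A - (T * C + D)).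
  by rewrite hx; field.
have eRe : forall A', A' = T * C + D ->
   4 * (A' * x + B - (x * (C * x + D) - y * (C * y))) = 4 * B + C * (Q + T).
  move=> A' ->; rewrite hx.
  have -> : y * (C * y) = C * y ^+ 2 by ring.
  by rewrite hy2; case: hT => ->; field.
split.
- case=> h1 h2.
  have hA : A = T * C + D.
    apply/eqP; rewrite -subr_eq0; apply/eqP.
    have : y * (A - (T * C + D)) = 0 by rewrite -eIm h2 subrr.
    by move/eqP; rewrite mulf_eq0 (negbTE hy) /= => /eqP.
  split => //; rewrite -(eRe A hA) h1 subrr mulr0 //.
- case=> hA hB; split.
  + apply/eqP; rewrite -subr_eq0; apply/eqP.
    have := eRe A hA; rewrite hB => /eqP; rewrite mulf_eq0 => /orP[|/eqP //].
    by rewrite pnatr_eq0.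
  + apply/eqP; rewrite -subr_eq0; apply/eqP; by rewrite eIm hA subrr mulr0.
Qed.

Lemma Complex_eq (a b c d : RR) : (Complex a b : CC) = Complex c d <-> a = c /\ b = d.
Proof. by split => [[-> ->]|[-> ->]]. Qed.

Lemma stab_eqn q (m : mat) : admissible_q q -> detm m = 1 ->
  (mobm m (zq q) = zq q <->
   let: (a, b, c, d) := m in a = tq q * c + d /\ 4 * b + c * (q%:Z + tq q) = 0).
Proof.
move=> hq; case: m => [[[a b] c] d] hdet.
have hz : 0 < complex.Im (zq q) := lambda_gt0 hq.
have hden := den_nz (lt0r_neq0 hz) (cd_nz hdet).
transitivity (a%:~R * zq q + b%:~R = zq q * (c%:~R * zq q + d%:~R)).
  rewrite /mobm; split => h; last by rewrite h mulfK.
  by move/(congr1 (fun u => u * (c%:~R * zq q + d%:~R))): h; rewrite divfK.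
set x := mu q; set y := lambda q.
have eL : a%:~R * zq q + b%:~R = Complex (a%:~R * x + b%:~R) (a%:~R * y).
  rewrite /zq CmulE CaddE !Re_intr !Im_intr /= -/x -/y; congr Complex; ring.
have eR : zq q * (c%:~R * zq q + d%:~R) =
   Complex (x * (c%:~R * x + d%:~R) - y * (c%:~R * y)) (x * (c%:~R * y) + y * (c%:~R * x + d%:~R)).
  rewrite /zq !CmulE !CaddE !Re_intr !Im_intr /= -/x -/y; congr Complex; ring.
rewrite eL eR Complex_eq.
have hT : ((tq q)%:~R : RR) = 0 \/ ((tq q)%:~R : RR) = 1.
  by case: (tq_Nq hq) => [[->|->] _]; [left|right].
rewrite (stab_real _ _ _ _ (lt0r_neq0 hz) (mu_t hq) (lambda2 q) hT).
have eB : ((4 * b + c * (q%:Z + tq q))%:~R : RR) = 4 * b%:~R + c%:~R * (q%:R + (tq q)%:~R).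
  by rewrite intrD !intrM intrD.
rewrite -eB -intrM -intrD.
split.
  case=> /eqP; rewrite eqr_int => /eqP -> /eqP; rewrite intr_eq0 => /eqP //.
by case=> -> ->.
Qed.

Definition stabl (q : nat) : seq mat :=
  if q == 3%N then [:: idm; (1, -1, 1, 0); (0, -1, 1, -1)]
  else if q == 4%N then [:: idm; (0, -1, 1, 0)] else [:: idm].

Lemma stab_int q (m : mat) : admissible_q q -> psl_rep m ->
  ((let: (a, b, c, d) := m in a = tq q * c + d /\ 4 * b + c * (q%:Z + tq q) = 0)
   <-> m \in stabl q).
Proof.
move=> hq; case: m => [[[a b] c] d] /= /andP[/eqP hdet hn].
qcase hq; rewrite /tq /stabl /= /idm !inE !xpair_eqE; split.
all: try (by lia).
all: case=> ha hb; subst a.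
all: rewrite ?mul1r ?mul0r ?add0r in hdet *.
all: move: hb; rewrite -?(intrD _ (Posz _)) /= => hb.
- have hb2 : b = - c by lia.
  rewrite hb2 in hdet; have hc1 : c <= 1 by nia.
  have hc0 : 0 <= c by lia.
  have [hc|hc] : c = 0 \/ c = 1 by lia.
    subst c; have : d = 1 by nia.
    lia.
  subst c; have : -1 <= d <= 0 by nia.
  lia.
- have hb2 : b = - c by lia.
  rewrite hb2 in hdet; have hc1 : c <= 1 by nia.
  have hc0 : 0 <= c by lia.
  have [hc|hc] : c = 0 \/ c = 1 by lia.
    subst c; have : d = 1 by nia.
    lia.
  subst c; have : d = 0 by nia.
  lia.
- have hb2 : b = - (c * 2) by lia.
  rewrite hb2 in hdet; have hc : c = 0 by nia.
  subst c; have : d = 1 by nia.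
  lia.
- have hb2 : b = - (c * 2) by lia.
  rewrite hb2 in hdet; have hc : c = 0 by nia.
  subst c; have : d = 1 by nia.
  lia.
- have hb2 : b = - (c * 3) by lia.
  rewrite hb2 in hdet; have hc : c = 0 by nia.
  subst c; have : d = 1 by nia.
  lia.
- have hb2 : b = - (c * 5) by lia.
  rewrite hb2 in hdet; have hc : c = 0 by nia.
  subst c; have : d = 1 by nia.
  lia.
- have hb2 : b = - (c * 11) by lia.
  rewrite hb2 in hdet; have hc : c = 0 by nia.
  subst c; have : d = 1 by nia.
  lia.
- have hb2 : b = - (c * 17) by lia.
  rewrite hb2 in hdet; have hc : c = 0 by nia.
  subst c; have : d = 1 by nia.
  lia.
- have hb2 : b = - (c * 41) by lia.
  rewrite hb2 in hdet; have hc : c = 0 by nia.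
  subst c; have : d = 1 by nia.
  lia.
Qed.

Lemma stab_iff q (m : mat) : admissible_q q -> psl_rep m ->
  (mobm m (zq q) = zq q <-> m \in stabl q).
Proof.
move=> hq hm; rewrite (stab_eqn hq (psl_det hm)).
by rewrite -(stab_int hq hm); case: m hm => [[[a b] c] d].
Qed.

Definition Phi (q : nat) (w : CC) : CC :=
  ((2 * lambda q ^+ 2 * cosh_rho (zq q) w + 2 * lambda q ^+ 2)%:C)%C * fq q w.

Lemma phiE q g : phi q g = Phi q (mob g (zq q)). Proof. by []. Qed.

Lemma Phi_formula q (w : CC) : admissible_q q -> 0 < complex.Im w ->
  Phi q w = Complex (2 * lambda q ^+ 2 * (complex.Re w - mu q) / complex.Im w)
     (lambda q * ((complex.Re w - mu q) ^+ 2 + complex.Im w ^+ 2 - lambda q ^+ 2) / complex.Im w).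
Proof.
move=> hq hw; have hl := lambda_gt0 hq.
rewrite /Phi /fq /cosh_rho /abs2 (C_eta w) /zq /=.
move: (complex.Re w) (complex.Im w) hw => X Y hY.
move: (mu q) (lambda q) hl => m l hl.
rewrite !CmulE !CaddE !CoppE CinvE /=.
have hD : (X - m) ^+ 2 + (Y - - l) ^+ 2 != 0.
  apply: lt0r_neq0; have := sqr_ge0 (X - m); have : 0 < (Y - - l) ^+ 2 by apply: sqr_pos; apply: lt0r_neq0; lra.
  lra.
have hY0 : Y != 0 by apply: lt0r_neq0.
have hl0 : l != 0 by apply: lt0r_neq0.
move: hD; set D := (X - m) ^+ 2 + (Y - - l) ^+ 2 => hD.
have eD : D = (X - m) ^+ 2 + (Y + l) ^+ 2 by rewrite /D opprK.
rewrite !mul0r !mul1r ?add0r ?sub0r ?subr0 ?addr0.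
rewrite eD in hD *; clear eD D.
by apply/Complex_eq; split; field; rewrite hY0 hD hl0.
Qed.

Lemma Phi_inj q (w1 w2 : CC) : admissible_q q -> 0 < complex.Im w1 -> 0 < complex.Im w2 ->
  Phi q w1 = Phi q w2 -> w1 = w2.
Proof.
move=> hq h1 h2; rewrite !Phi_formula // Complex_eq (C_eta w1) (C_eta w2) /=.
move: (complex.Re w1) (complex.Im w1) (complex.Re w2) (complex.Im w2) h1 h2 => X1 Y1 X2 Y2 h1 h2.
have hl := lambda_gt0 hq.
move: (mu q) (lambda q) hl => m l hl [e1 e2].
have hY1 : Y1 != 0 by apply: lt0r_neq0.
have hY2 : Y2 != 0 by apply: lt0r_neq0.
have hl0 : l != 0 by apply: lt0r_neq0.
set u := (X1 - m) / Y1.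
have hs1 : X1 - m = u * Y1 by rewrite /u divfK.
have hs2 : X2 - m = u * Y2.
  have : (X2 - m) / Y2 = u.
    have e : (X2 - m) / Y2 = (2 * l ^+ 2 * (X2 - m) / Y2) / (2 * l ^+ 2).
      by field; rewrite hl0 hY2.
    by rewrite e -e1 /u; field; rewrite hY1 hl0.
  by move=> <-; rewrite divfK.
rewrite hs1 hs2 in e2.
have key : (Y1 - Y2) * ((u ^+ 2 + 1) * Y1 * Y2 + l ^+ 2) =
   Y1 * Y2 / l * (l * ((u * Y1) ^+ 2 + Y1 ^+ 2 - l ^+ 2) / Y1 - l * ((u * Y2) ^+ 2 + Y2 ^+ 2 - l ^+ 2) / Y2).
  by field; rewrite hY1 hY2 hl0.
rewrite e2 subrr mulr0 in key.
have hpos : 0 < (u ^+ 2 + 1) * Y1 * Y2 + l ^+ 2.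
  have := sqr_ge0 u; have := sqr_ge0 l.
  have : 0 < Y1 * Y2 by apply: mulr_gt0.
  nra.
move/eqP: key; rewrite mulf_eq0 (gt_eqF hpos) orbF subr_eq0 => /eqP eY.
have eX : X1 = X2 by apply/eqP; rewrite -(subrK m X1) hs1 eY -hs2 subrK.
by rewrite eX eY.
Qed.

Lemma stabl_psl q : all psl_rep (stabl q).
Proof. by rewrite /stabl; case: (q == 3%N); case: (q == 4%N). Qed.

Lemma stabl_uniq q : uniq (stabl q).
Proof. by rewrite /stabl; case: (q == 3%N); case: (q == 4%N). Qed.

Lemma stabl_pslP q s : s \in stabl q -> psl_rep s.
Proof. by move=> hs; move/allP: (stabl_psl q); apply. Qed.

Lemma gdet (g : PSL2Z) : detm (val g) = 1.
Proof. exact: psl_det (valP g). Qed.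

Lemma mob_pos q (g : PSL2Z) : admissible_q q -> 0 < complex.Im (mob g (zq q)).
Proof. move=> hq; rewrite mobE; apply: Im_mobm (gdet g); exact: lambda_gt0. Qed.

Definition Lg q (g : PSL2Z) : seq mat := map (fun s => normm (mulm (val g) s)) (stabl q).

Lemma normm_mulN m s : detm m = 1 -> detm s = 1 -> normm (mulm m (normm s)) = normm (mulm m s).
Proof.
move=> hm hs; case: (normm_cases s) => -> //.
by rewrite matmN normmN // detmM hm hs.
Qed.

Lemma preimage_iff q (g g' : PSL2Z) : admissible_q q ->
  (mob g' (zq q) = mob g (zq q) <-> val g' \in Lg q g).
Proof.
move=> hq; have hz : 0 < complex.Im (zq q) := lambda_gt0 hq.
have dg := gdet g; have dg' := gdet g'.
have dadj : detm (adjm (val g)) = 1 by rewrite detm_adj.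
split.
- rewrite !mobE => h.
  set M := mulm (adjm (val g)) (val g').
  have dM : detm M = 1 by rewrite detmM dadj dg'.
  have hM : mobm M (zq q) = zq q.
    rewrite /M mobm_comp // h -mobm_comp // mul_adjm_l // mobm_id //.
  have hN : normm M \in stabl q.
    by rewrite -stab_iff ?normm_psl // mob_normm.
  apply/mapP; exists (normm M) => //.
  rewrite normm_mulN // /M -matmA mul_adjm_r // matm1 normm_id //.
  exact: valP g'.
- case/mapP => s hs e; rewrite !mobE e mob_normm mobm_comp //; last first.
    exact: psl_det (stabl_pslP hs).
  have hs' : mobm s (zq q) = zq q by apply/(stab_iff hq (stabl_pslP hs)).
  by rewrite hs'.
Qed.

Lemma Lg_uniq q (g : PSL2Z) : uniq (Lg q g).
Proof.
rewrite map_inj_in_uniq ?stabl_uniq // => s1 s2 h1 h2 e.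
have linv : forall s, s \in stabl q ->
    normm (mulm (adjm (val g)) (normm (mulm (val g) s))) = s.
  move=> s hs; have ps := stabl_pslP hs; have ds := psl_det ps.
  have dg := gdet g.
  rewrite normm_mulN ?detmM ?detm_adj ?dg ?ds //.
  by rewrite -matmA mul_adjm_l // matm1 normm_id.
by rewrite -(linv _ h1) e linv.
Qed.

Lemma Lg_psl q (g : PSL2Z) : all psl_rep (Lg q g).
Proof.
apply/allP => m /mapP [s hs ->]; apply: normm_psl.
by rewrite detmM gdet (psl_det (stabl_pslP hs)).
Qed.

Lemma card_pmap (s : seq mat) : all psl_rep s -> uniq s ->
  uniq (pmap insub s : seq PSL2Z) /\ size (pmap insub s : seq PSL2Z) = size s.
Proof.
move=> ha hu; split; first exact: pmap_sub_uniq.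
by rewrite size_pmap_sub; apply/eqP; rewrite -all_count.
Qed.

Lemma stab_card q : admissible_q q -> has_card (Stab q) (size (stabl q)).
Proof.
move=> hq; have [hu hs] := card_pmap (stabl_psl q) (stabl_uniq q).
exists (pmap insub (stabl q)); split => //; split => // g.
rewrite mem_pmap_sub /Stab mobE; split => h.
  by apply/stab_iff => //; exact: valP g.
by apply/stab_iff => //; exact: valP g.
Qed.

Lemma phi_card q (w : CC) : admissible_q q -> (exists g, phi q g = w) ->
  has_card (fun g => phi q g = w) (size (stabl q)).
Proof.
move=> hq [g <-].
have [hu hs] := card_pmap (Lg_psl q g) (Lg_uniq q g).
exists (pmap insub (Lg q g)); split => //; split; last by rewrite hs size_map.
move=> g'; rewrite mem_pmap_sub -preimage_iff // !phiE; split => [->|h] //.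
by apply: Phi_inj h => //; apply: mob_pos.
Qed.

Definition embR {R : numFieldType} (zeta : R) (p : rat * rat) : R := ratr p.1 + ratr p.2 * zeta.
Definition pmul (t N : rat) (p1 p2 : rat * rat) : rat * rat :=
  (p1.1 * p2.1 - N * p1.2 * p2.2, p1.1 * p2.2 + p1.2 * p2.1 + t * p1.2 * p2.2).
Definition padd (p1 p2 : rat * rat) : rat * rat := (p1.1 + p2.1, p1.2 + p2.2).
Fixpoint hf (t N : rat) (s : seq int) (w : rat * rat) : rat * rat :=
  match s with
  | [::] => (0, 0)
  | c :: s' => padd (pmul t N (hf t N s' w) w) (c%:~R, 0)
  end.

Section Generic.
Variable R : numFieldType.
Variables (zeta : R) (t N : rat).
Hypothesis hz : zeta ^+ 2 = ratr t * zeta - ratr N.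

Lemma embR_mul p1 p2 : embR zeta (pmul t N p1 p2) = embR zeta p1 * embR zeta p2.
Proof.
case: p1 => u1 v1; case: p2 => u2 v2; rewrite /embR /= !rmorphD !rmorphN !rmorphM.
have -> : ratr u1 * ratr u2 - ratr N * ratr v1 * ratr v2 +
  (ratr u1 * ratr v2 + ratr v1 * ratr u2 + ratr t * ratr v1 * ratr v2) * zeta =
  (ratr u1 + ratr v1 * zeta) * (ratr u2 + ratr v2 * zeta)
  - ratr v1 * ratr v2 * (zeta ^+ 2 - (ratr t * zeta - ratr N)) :> R by ring.
by rewrite hz subrr mulr0 subr0.
Qed.

Lemma embR_add p1 p2 : embR zeta (padd p1 p2) = embR zeta p1 + embR zeta p2.
Proof. case: p1 => u1 v1; case: p2 => u2 v2; rewrite /embR /= !rmorphD; ring. Qed.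

Lemma horner_hf (s : seq int) w :
  horner_rec (map (fun c : int => c%:~R : R) s) (embR zeta w) = embR zeta (hf t N s w).
Proof.
elim: s => [|c s IH] /=; first by rewrite /embR /= rmorph0 mul0r addr0.
rewrite IH embR_add embR_mul; congr (_ + _).
by rewrite /embR /= ratr_int rmorph0 mul0r addr0.
Qed.

Lemma root_hf (p : {poly int}) w :
  root (map_poly (fun c : int => c%:~R : R) p) (embR zeta w) = (embR zeta (hf t N p w) == 0).
Proof. by rewrite /root map_polyE horner_Poly horner_hf. Qed.

End Generic.

Lemma tN_real q : admissible_q q ->
  (((tq q)%:~R : RR) = 0 \/ ((tq q)%:~R : RR) = 1) /\
  4 * ((Nq q)%:~R : RR) = q%:R + (tq q)%:~R.
Proof.
move=> hq; have [[->|->] [h4 _]] := tq_Nq hq.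
  split; first by left.
  by have := congr1 (fun k : int => k%:~R : RR) h4; rewrite /= intrM intrD.
split; first by right.
by have := congr1 (fun k : int => k%:~R : RR) h4; rewrite /= intrM intrD.
Qed.

Lemma zq_sq q : admissible_q q ->
  zq q ^+ 2 = ratr (tq q)%:~R * zq q - ratr (Nq q)%:~R.
Proof.
move=> hq; rewrite !ratr_int expr2 /zq !CmulE CaddE CoppE !Re_intr !Im_intr /=.
have [hT hN] := tN_real hq.
have hl2 : lambda q * lambda q = q%:R / 4 by rewrite -expr2 lambda2.
rewrite (mu_t hq).
move: hN hl2 hT; move: ((tq q)%:~R : RR) ((Nq q)%:~R : RR) (lambda q) => T N l hN hl2 hT.
apply/Complex_eq; split.
  rewrite hl2; have -> : N = (q%:R + T) / 4 by rewrite -hN; field.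
  by case: hT => ->; field.
by case: hT => ->; field.
Qed.

Lemma embC_eq0 q (u v : rat) : admissible_q q -> embR (zq q) (u, v) = 0 -> u = 0 /\ v = 0.
Proof.
move=> hq; rewrite /embR /= !ratrC /zq CmulE CaddE /= => e.
have e2 := congr1 (@complex.Im RR) e; have e1 := congr1 (@complex.Re RR) e.
simpl in e1, e2.
have hl := lambda_gt0 hq.
move: e2; rewrite mul0r add0r addr0 => /eqP; rewrite mulf_eq0 (gt_eqF hl) orbF fmorph_eq0 => /eqP hv.
move: e1; rewrite hv rmorph0 !mul0r subr0 addr0 => /eqP; rewrite fmorph_eq0 => /eqP hu.
by [].
Qed.

Lemma embC_inj q : admissible_q q -> injective (embR (zq q)).
Proof.
move=> hq [u1 v1] [u2 v2] e.
have e' : embR (zq q) (u1 - u2, v1 - v2) = embR (zq q) (u1, v1) - embR (zq q) (u2, v2).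
  by rewrite /embR /= !rmorphB; ring.
rewrite e subrr in e'; move: e'.
case/(embC_eq0 hq) => /eqP; rewrite subr_eq0 => /eqP -> /eqP; rewrite subr_eq0 => /eqP -> //.
Qed.

Lemma monic3 (c0 c1 : int) : Poly [:: c0; c1; 1] \is monic.
Proof. by rewrite monicE lead_coefE (PolyK (c := 0)) //= oner_neq0. Qed.

Lemma int_alg q (a b : int) : admissible_q q -> alg_integer (embR (zq q) (a%:~R, b%:~R)).
Proof.
move=> hq.
set T := tq q; set N := Nq q.
exists (Poly [:: a * a + T * a * b + N * b * b; - (2 * a + T * b); 1]); split; first exact: monic3.
rewrite /root map_polyE (PolyK (c := 0)) ?oner_neq0 // horner_Poly /= /embR /= !ratr_int.
have hz := zq_sq hq; rewrite !ratr_int in hz.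
rewrite !intrD !intrN !intrM !intrD !intrM mul0r add0r mul1r.
apply/eqP.
transitivity ((b%:~R) ^+ 2 * (zq q ^+ 2 - (T%:~R * zq q - N%:~R)) : CC).
  rewrite /T /N; move: (zq q) => z; move: (a%:~R) (b%:~R) ((tq q)%:~R) ((Nq q)%:~R) => A B T' N'.
  have -> : (2 : int)%:~R = (2 : CC) by [].
  ring.
by rewrite hz subrr mulr0.
Qed.

From mathcomp Require Import all_field.
Import Order.TTheory GRing.Theory Num.Theory.

Definition zA (q : nat) : algC := ((tq q)%:~R + 'i * sqrtC (q%:R)) / 2.

Lemma quad_gen (F : numFieldType) (i s T N Q : F) : i ^+ 2 = -1 -> s ^+ 2 = Q ->
  T ^+ 2 = T -> 4 * N = Q + T -> ((T + i * s) / 2) ^+ 2 = T * ((T + i * s) / 2) - N.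
Proof.
move=> hi hs hT hN.
have -> : ((T + i * s) / 2) ^+ 2 = (T ^+ 2 + 2 * T * i * s + i ^+ 2 * s ^+ 2) / 4.
  by field; rewrite ?pnatr_eq0.
have -> : T * ((T + i * s) / 2) = (T ^+ 2 + T * i * s) / 2 by field; rewrite ?pnatr_eq0.
rewrite hi hs hT.
have -> : N = (Q + T) / 4 by rewrite -hN; field; rewrite ?pnatr_eq0.
by field; rewrite ?pnatr_eq0.
Qed.

Lemma zA_sq q : admissible_q q -> zA q ^+ 2 = ratr (tq q)%:~R * zA q - ratr (Nq q)%:~R.
Proof.
move=> hq; rewrite !ratr_int /zA.
have [ht [h4 _]] := tq_Nq hq.
apply: quad_gen.
- exact: sqrCi.
- exact: sqrtCK.
- by rewrite expr2 -intrM tq2.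
- by have := congr1 (fun k : int => k%:~R : algC) h4; rewrite /= intrM intrD.
Qed.

Lemma zA_conj q : (zA q)^* = (tq q)%:~R - zA q.
Proof.
have hs : (sqrtC (q%:R : algC))^* = sqrtC q%:R.
  by apply: geC0_conj; rewrite sqrtC_ge0 ler0n.
rewrite /zA rmorphM rmorphD rmorphM /= hs conjCi fmorphV rmorph_int rmorph_nat.
by field; rewrite ?pnatr_eq0.
Qed.

Lemma transfer q (p : {poly int}) (a b : rat) : admissible_q q ->
  root (map_poly (fun c : int => c%:~R : CC) p) (embR (zq q) (a, b)) ->
  root (map_poly (fun c : int => c%:~R : algC) p) (embR (zA q) (a, b)).
Proof.
move=> hq; rewrite (root_hf (zq_sq hq)) (root_hf (zA_sq hq)).
case: (hf _ _ p (a, b)) => u v /eqP /(embC_eq0 hq) [-> ->].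
by rewrite /embR /= rmorph0 mul0r addr0.
Qed.

Lemma alg_Aint q (a b : rat) : admissible_q q -> alg_integer (embR (zq q) (a, b)) ->
  embR (zA q) (a, b) \in Aint.
Proof.
move=> hq [p [hm hr]].
apply: (root_monic_Aint (p := map_poly (fun c : int => c%:~R : algC) p)).
- exact: transfer hr.
- exact: monic_map.
- by apply/polyOverP => i; rewrite coef_map intr_int.
Qed.

Lemma zA_Aint q : admissible_q q -> zA q \in Aint.
Proof.
move=> hq; have := alg_Aint hq (int_alg 0 1 hq).
by rewrite /embR /= !ratr_int mulr0z mulr1z add0r mul1r.
Qed.

Lemma rat_int_of (r : rat) (y : algC) : y \in Aint -> y = ratr r -> r \is a Num.int.
Proof.
move=> hy e.
have : y \is a Num.int by apply: Cint_rat_Aint => //; rewrite e Crat_rat.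
rewrite e => /intrP [k hk]; apply/intrP; exists k.
rewrite -(ratr_int algC k) in hk; exact: fmorph_inj hk.
Qed.

Lemma ident3 (R : comRingType) (A B z T N : R) : z ^+ 2 = T * z - N ->
  [/\ (A + B * z) + (A + B * (T - z)) = 2 * A + T * B,
      (A + B * z) * (T - z) + (A + B * (T - z)) * z = T * A + 2 * N * B &
      (A + B * z) * (A + B * (T - z)) = A * A + T * A * B + N * B * B].
Proof.
move=> hz; split.
- ring.
- have -> : (A + B * z) * (T - z) + (A + B * (T - z)) * z =
     T * A + 2 * N * B - 2 * B * (z ^+ 2 - (T * z - N)) by ring.
  by rewrite hz subrr mulr0 subr0.
- have -> : (A + B * z) * (A + B * (T - z)) =
     A * A + T * A * B + N * B * B - B * B * (z ^+ 2 - (T * z - N)) by ring.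
  by rewrite hz subrr mulr0 subr0.
Qed.

Lemma int_traces q (a b : rat) : admissible_q q -> alg_integer (embR (zq q) (a, b)) ->
  [/\ 2 * a + (tq q)%:~R * b \is a Num.int,
      (tq q)%:~R * a + 2 * (Nq q)%:~R * b \is a Num.int &
      a * a + (tq q)%:~R * a * b + (Nq q)%:~R * b * b \is a Num.int].
Proof.
move=> hq hx.
have hxA : ratr a + ratr b * zA q \in Aint := alg_Aint hq hx.
have hzA := zA_Aint hq.
have hz2 := zA_sq hq; rewrite !ratr_int in hz2.
have hxc : (ratr a + ratr b * zA q)^* \in Aint by rewrite Aint_aut.
have hzc : (zA q)^* \in Aint by rewrite Aint_aut.
have ex : (ratr a + ratr b * zA q)^* = ratr a + ratr b * ((tq q)%:~R - zA q).
  rewrite rmorphD fmorph_rat rmorphM fmorph_rat; congr (_ + _ * _); exact: zA_conj.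
have ezc := zA_conj q.
have [i1 i2 i3] := ident3 (ratr a) (ratr b) hz2.
split.
- apply: (rat_int_of (y := (ratr a + ratr b * zA q) + (ratr a + ratr b * zA q)^*)).
    exact: rpredD.
  by rewrite ex i1 rmorphD !rmorphM rmorph_nat rmorph_int.
- apply: (rat_int_of (y := (ratr a + ratr b * zA q) * (zA q)^* + (ratr a + ratr b * zA q)^* * zA q)).
    by apply: rpredD; apply: rpredM.
  by rewrite ex ezc i2 rmorphD !rmorphM rmorph_nat !rmorph_int.
- apply: (rat_int_of (y := (ratr a + ratr b * zA q) * (ratr a + ratr b * zA q)^*)).
    exact: rpredM.
  by rewrite ex i3 !rmorphD !rmorphM !rmorph_int.
Qed.

Arguments ratr : simpl never.

Definition uli (q : nat) : seq (int * int) :=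
  if q == 3%N then [:: (1, 0); (-1, 0); (0, 1); (0, -1); (-1, 1); (1, -1)]
  else if q == 4%N then [:: (1, 0); (-1, 0); (0, 1); (0, -1)] else [:: (1, 0); (-1, 0)].
Definition cast2 (p : int * int) : rat * rat := (p.1%:~R, p.2%:~R).
Definition U q : seq CC := map (fun p => embR (zq q) (cast2 p)) (uli q).

Lemma size_U q : size (U q) = (2 * size (stabl q))%N.
Proof. by rewrite size_map /uli /stabl; case: (q == 3%N); case: (q == 4%N). Qed.

Lemma cast2_inj : injective cast2.
Proof.
move=> [a b] [c d] [/eqP e1 /eqP e2]; move: e1 e2; rewrite !eqr_int => /eqP -> /eqP -> //.
Qed.

Lemma U_uniq q : admissible_q q -> uniq (U q).
Proof.
move=> hq; rewrite map_inj_uniq; last by move=> p1 p2 /(embC_inj hq) /cast2_inj.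
by rewrite /uli; case: (q == 3%N); case: (q == 4%N).
Qed.

Definition pmulI (t N : int) (p1 p2 : int * int) : int * int :=
  (p1.1 * p2.1 - N * p1.2 * p2.2, p1.1 * p2.2 + p1.2 * p2.1 + t * p1.2 * p2.2).

Lemma cast2_pmul t N p1 p2 :
  pmul t%:~R N%:~R (cast2 p1) (cast2 p2) = cast2 (pmulI t N p1 p2).
Proof. by rewrite /pmul /cast2 /pmulI /= !intrD !intrN !intrM. Qed.

Lemma inv_ok q : admissible_q q ->
  all (fun p => has (fun p' => pmulI (tq q) (Nq q) p p' == (1, 0)) (uli q)) (uli q).
Proof. by move=> hq; qcase hq. Qed.

Lemma uli_nz q : (0, 0) \notin uli q.
Proof. by rewrite /uli; case: (q == 3%N); case: (q == 4%N). Qed.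

Lemma U_OK q p : admissible_q q -> OK q (embR (zq q) (cast2 p)).
Proof.
move=> hq; split; first by exists (p.1%:~R), (p.2%:~R).
exact: int_alg.
Qed.

Lemma embR10 q : embR (zq q) (1, 0) = 1.
Proof. by rewrite /embR /= rmorph1 rmorph0 mul0r addr0. Qed.

Lemma U_unit q x : admissible_q q -> x \in U q -> OK_unit q x.
Proof.
move=> hq /mapP [p hp ->].
have hnz : embR (zq q) (cast2 p) != 0.
  apply/negP => /eqP /(embC_eq0 hq) [] /eqP; rewrite intr_eq0 => /eqP h1 /eqP; rewrite intr_eq0 => /eqP h2.
  by move: (uli_nz q); case: p hp h1 h2 => a b hp /= h1 h2; subst a b; rewrite hp.
split; first exact: U_OK.
split => //.
have := allP (inv_ok hq) p hp => /hasP [p' hp' /eqP e].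
have hm : embR (zq q) (cast2 p) * embR (zq q) (cast2 p') = 1.
  by rewrite -(embR_mul (zq_sq hq)) cast2_pmul e embR10.
have -> : (embR (zq q) (cast2 p))^-1 = embR (zq q) (cast2 p').
  by rewrite -[RHS](mulKf hnz) hm mulr1.
exact: U_OK.
Qed.

Lemma sq_root (u : int) (m r0 : nat) : u * u = m%:Z -> (m < 729)%N ->
  all (fun r => ((r * r)%N != m) || (r == r0)) (iota 0 27) -> u = r0%:Z \/ u = - r0%:Z.
Proof.
move=> hu hm /allP hr.
have e : (absz u * absz u)%N = m by have := congr1 absz hu; rewrite abszM.
have hlt : (absz u < 27)%N.
  rewrite ltnNge; apply/negP => h; have := leq_mul h h; rewrite e => h2.
  by move: (leq_trans h2 hm).
have := hr (absz u); rewrite mem_iota /= hlt e eqxx /= => /(_ isT) /eqP h.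
lia.
Qed.

Lemma abs2_mul (u v : CC) : abs2 (u * v) = abs2 u * abs2 v.
Proof. by rewrite /abs2 CmulE /=; ring. Qed.

Lemma abs2_ge0 (u : CC) : 0 <= abs2 u.
Proof. by rewrite /abs2 addr_ge0 ?sqr_ge0. Qed.

Lemma abs2_1 : abs2 1 = 1.
Proof. by rewrite /abs2 /= expr1n expr0n addr0. Qed.

Lemma embR_C q (a b : rat) :
  embR (zq q) (a, b) = Complex (ratr a + ratr b * mu q) (ratr b * lambda q).
Proof. rewrite /embR !ratrC /zq CmulE CaddE /=; apply/Complex_eq; split; ring. Qed.

Lemma ratr_quad (F : numFieldType) (a b T N : rat) :
  (ratr (a * a + T * a * b + N * b * b) : F) =
  ratr a * ratr a + ratr T * ratr a * ratr b + ratr N * ratr b * ratr b.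
Proof. by rewrite !rmorphD !rmorphM. Qed.

Lemma abs2_emb q (a b : rat) : admissible_q q ->
  abs2 (embR (zq q) (a, b)) = ratr (a * a + (tq q)%:~R * a * b + (Nq q)%:~R * b * b).
Proof.
move=> hq; rewrite embR_C /abs2 /= (mu_t hq).
have [hT hN] := tN_real hq.
rewrite ratr_quad !ratr_int exprMn lambda2.
move: hT hN; move: (ratr a : RR) (ratr b : RR) ((tq q)%:~R : RR) ((Nq q)%:~R : RR) => A B T N hT hN.
have -> : N = (q%:R + T) / 4 by rewrite -hN; field.
by case: hT => ->; field.
Qed.

Lemma quad_int (a b T N Q : rat) (k1 k2 : int) : T * T = T -> 4 * N = Q + T ->
  2 * a + T * b = k1%:~R -> T * a + 2 * N * b = k2%:~R -> a * a + T * a * b + N * b * b = 1 ->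
  Q * (k1%:~R * k1%:~R) + (2 * k2%:~R - T * k1%:~R) * (2 * k2%:~R - T * k1%:~R) = 4 * Q.
Proof.
move=> hT hN <- <- hn.
have e : Q * ((2 * a + T * b) * (2 * a + T * b)) +
    (2 * (T * a + 2 * N * b) - T * (2 * a + T * b)) * (2 * (T * a + 2 * N * b) - T * (2 * a + T * b))
  = 4 * Q * (a * a + T * a * b + N * b * b) + b * b * (Q * (T * T) + (4 * N - T * T) ^+ 2 - Q * (4 * N)) by ring.
rewrite e hn hT hN; ring.
Qed.

Lemma memU q (a b : rat) (x y : int) : (x, y) \in uli q -> a = x%:~R -> b = y%:~R ->
  embR (zq q) (a, b) \in U q.
Proof. move=> h -> ->; exact: (map_f (fun p => embR (zq q) (cast2 p)) h). Qed.

Lemma OK_unit_in q x : admissible_q q -> OK_unit q x -> x \in U q.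
Proof.
move=> hq [[[a [b ex]] hxa] [hx0 [[a' [b' exi]] hxa']]].
have hxa2 : alg_integer (embR (zq q) (a, b)) by rewrite /embR /= -ex.
have hxa2' : alg_integer (embR (zq q) (a', b')) by rewrite /embR /= -exi.
have [i1 i2 i3] := int_traces hq hxa2.
have [_ _ i3'] := int_traces hq hxa2'.
have hn : abs2 x * abs2 x^-1 = 1 by rewrite -abs2_mul mulfV // abs2_1.
have hge := abs2_ge0 x.
have ex' : x = embR (zq q) (a, b) by [].
have exi' : x^-1 = embR (zq q) (a', b') by [].
rewrite exi' ex' !abs2_emb // -rmorphM in hn.
rewrite ex' abs2_emb // ler0q in hge.
move/eqP: hn; rewrite fmorph_eq1 => /eqP hn.
case/intrP: i3 => k3 hk3; case/intrP: i3' => k3' hk3'.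
rewrite hk3 hk3' -intrM in hn; rewrite hk3 ler0z in hge.
have hk : k3 * k3' = 1 by apply/eqP; rewrite -(eqr_int rat) hn.
have hk3p : 0 < k3 by move: hk hge; case: (k3 =P 0) => [->|]; lia.
have hk3p2 : 0 < k3' by nia.
have e3 : k3 = 1 by nia.
rewrite e3 in hk3.
case/intrP: i1 => k1 hk1; case/intrP: i2 => k2 hk2.
have hT : ((tq q)%:~R : rat) * (tq q)%:~R = (tq q)%:~R by rewrite -intrM tq2.
have [_ [h4 _]] := tq_Nq hq.
have hN : 4 * ((Nq q)%:~R : rat) = (q%:Z)%:~R + (tq q)%:~R.
  by have := congr1 (fun k : int => k%:~R : rat) h4; rewrite /= intrM intrD.
have hQ := quad_int hT hN hk1 hk2 hk3.
have hI : q%:Z * (k1 * k1) + (2 * k2 - tq q * k1) * (2 * k2 - tq q * k1) = 4 * q%:Z.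
  apply/eqP; rewrite -(eqr_int rat) !intrD !intrM !intrB !intrM; apply/eqP; exact: hQ.
rewrite ex'; clear hQ hN hT h4 hk3 hx0 hxa hxa' hxa2 hxa2' exi exi' ex ex' hge hn hk e3 hk3' hk.
move: hk1 hk2 hI; qcase hq; rewrite /tq /= => hk1 hk2 hI.
-
  rewrite (_ : Nq 3 = 1) // in hk2.
  have hk1b : -2 <= k1 <= 2 by nia.
  have : k1 = -2 \/ k1 = -1 \/ k1 = 0 \/ k1 = 1 \/ k1 = 2 by lia.
  case=> [e|[e|[e|[e|e]]]]; subst k1.
  + have hu0 : (2 * k2 - 1 * (-2)) * (2 * k2 - 1 * (-2)) = (0%N)%:Z by lia.
    case: (sq_root (r0 := 0%N) hu0 isT isT) => hu.
    * have ek2 : k2 = -1 by lia.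
      rewrite ek2 in hk2.
      apply: (memU (x := -1) (y := 0)); [by [] | lra | lra].
    * have ek2 : k2 = -1 by lia.
      rewrite ek2 in hk2.
      apply: (memU (x := -1) (y := 0)); [by [] | lra | lra].
  + have hu0 : (2 * k2 - 1 * (-1)) * (2 * k2 - 1 * (-1)) = (9%N)%:Z by lia.
    case: (sq_root (r0 := 3%N) hu0 isT isT) => hu.
    * have ek2 : k2 = 1 by lia.
      rewrite ek2 in hk2.
      apply: (memU (x := -1) (y := 1)); [by [] | lra | lra].
    * have ek2 : k2 = -2 by lia.
      rewrite ek2 in hk2.
      apply: (memU (x := 0) (y := -1)); [by [] | lra | lra].
  + have hu0 : (2 * k2 - 1 * (0)) * (2 * k2 - 1 * (0)) = (12%N)%:Z by lia.
    case: (sq_root (r0 := 0%N) hu0 isT isT) => hu.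
    * by exfalso; move: hu0; rewrite hu; lia.
    * by exfalso; move: hu0; rewrite hu; lia.
  + have hu0 : (2 * k2 - 1 * (1)) * (2 * k2 - 1 * (1)) = (9%N)%:Z by lia.
    case: (sq_root (r0 := 3%N) hu0 isT isT) => hu.
    * have ek2 : k2 = 2 by lia.
      rewrite ek2 in hk2.
      apply: (memU (x := 0) (y := 1)); [by [] | lra | lra].
    * have ek2 : k2 = -1 by lia.
      rewrite ek2 in hk2.
      apply: (memU (x := 1) (y := -1)); [by [] | lra | lra].
  + have hu0 : (2 * k2 - 1 * (2)) * (2 * k2 - 1 * (2)) = (0%N)%:Z by lia.
    case: (sq_root (r0 := 0%N) hu0 isT isT) => hu.
    * have ek2 : k2 = 1 by lia.
      rewrite ek2 in hk2.
      apply: (memU (x := 1) (y := 0)); [by [] | lra | lra].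
    * have ek2 : k2 = 1 by lia.
      rewrite ek2 in hk2.
      apply: (memU (x := 1) (y := 0)); [by [] | lra | lra].
-
  rewrite (_ : Nq 4 = 1) // in hk2.
  have hk1b : -2 <= k1 <= 2 by nia.
  have : k1 = -2 \/ k1 = -1 \/ k1 = 0 \/ k1 = 1 \/ k1 = 2 by lia.
  case=> [e|[e|[e|[e|e]]]]; subst k1.
  + have hu0 : (2 * k2 - 0 * (-2)) * (2 * k2 - 0 * (-2)) = (0%N)%:Z by lia.
    case: (sq_root (r0 := 0%N) hu0 isT isT) => hu.
    * have ek2 : k2 = 0 by lia.
      rewrite ek2 in hk2.
      apply: (memU (x := -1) (y := 0)); [by [] | lra | lra].
    * have ek2 : k2 = 0 by lia.
      rewrite ek2 in hk2.
      apply: (memU (x := -1) (y := 0)); [by [] | lra | lra].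
  + have hu0 : (2 * k2 - 0 * (-1)) * (2 * k2 - 0 * (-1)) = (12%N)%:Z by lia.
    case: (sq_root (r0 := 0%N) hu0 isT isT) => hu.
    * by exfalso; move: hu0; rewrite hu; lia.
    * by exfalso; move: hu0; rewrite hu; lia.
  + have hu0 : (2 * k2 - 0 * (0)) * (2 * k2 - 0 * (0)) = (16%N)%:Z by lia.
    case: (sq_root (r0 := 4%N) hu0 isT isT) => hu.
    * have ek2 : k2 = 2 by lia.
      rewrite ek2 in hk2.
      apply: (memU (x := 0) (y := 1)); [by [] | lra | lra].
    * have ek2 : k2 = -2 by lia.
      rewrite ek2 in hk2.
      apply: (memU (x := 0) (y := -1)); [by [] | lra | lra].
  + have hu0 : (2 * k2 - 0 * (1)) * (2 * k2 - 0 * (1)) = (12%N)%:Z by lia.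
    case: (sq_root (r0 := 0%N) hu0 isT isT) => hu.
    * by exfalso; move: hu0; rewrite hu; lia.
    * by exfalso; move: hu0; rewrite hu; lia.
  + have hu0 : (2 * k2 - 0 * (2)) * (2 * k2 - 0 * (2)) = (0%N)%:Z by lia.
    case: (sq_root (r0 := 0%N) hu0 isT isT) => hu.
    * have ek2 : k2 = 0 by lia.
      rewrite ek2 in hk2.
      apply: (memU (x := 1) (y := 0)); [by [] | lra | lra].
    * have ek2 : k2 = 0 by lia.
      rewrite ek2 in hk2.
      apply: (memU (x := 1) (y := 0)); [by [] | lra | lra].
-
  rewrite (_ : Nq 7 = 2) // in hk2.
  have hk1b : -2 <= k1 <= 2 by nia.
  have : k1 = -2 \/ k1 = -1 \/ k1 = 0 \/ k1 = 1 \/ k1 = 2 by lia.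
  case=> [e|[e|[e|[e|e]]]]; subst k1.
  + have hu0 : (2 * k2 - 1 * (-2)) * (2 * k2 - 1 * (-2)) = (0%N)%:Z by lia.
    case: (sq_root (r0 := 0%N) hu0 isT isT) => hu.
    * have ek2 : k2 = -1 by lia.
      rewrite ek2 in hk2.
      apply: (memU (x := -1) (y := 0)); [by [] | lra | lra].
    * have ek2 : k2 = -1 by lia.
      rewrite ek2 in hk2.
      apply: (memU (x := -1) (y := 0)); [by [] | lra | lra].
  + have hu0 : (2 * k2 - 1 * (-1)) * (2 * k2 - 1 * (-1)) = (21%N)%:Z by lia.
    case: (sq_root (r0 := 0%N) hu0 isT isT) => hu.
    * by exfalso; move: hu0; rewrite hu; lia.
    * by exfalso; move: hu0; rewrite hu; lia.
  + have hu0 : (2 * k2 - 1 * (0)) * (2 * k2 - 1 * (0)) = (28%N)%:Z by lia.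
    case: (sq_root (r0 := 0%N) hu0 isT isT) => hu.
    * by exfalso; move: hu0; rewrite hu; lia.
    * by exfalso; move: hu0; rewrite hu; lia.
  + have hu0 : (2 * k2 - 1 * (1)) * (2 * k2 - 1 * (1)) = (21%N)%:Z by lia.
    case: (sq_root (r0 := 0%N) hu0 isT isT) => hu.
    * by exfalso; move: hu0; rewrite hu; lia.
    * by exfalso; move: hu0; rewrite hu; lia.
  + have hu0 : (2 * k2 - 1 * (2)) * (2 * k2 - 1 * (2)) = (0%N)%:Z by lia.
    case: (sq_root (r0 := 0%N) hu0 isT isT) => hu.
    * have ek2 : k2 = 1 by lia.
      rewrite ek2 in hk2.
      apply: (memU (x := 1) (y := 0)); [by [] | lra | lra].
    * have ek2 : k2 = 1 by lia.
      rewrite ek2 in hk2.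
      apply: (memU (x := 1) (y := 0)); [by [] | lra | lra].
-
  rewrite (_ : Nq 8 = 2) // in hk2.
  have hk1b : -2 <= k1 <= 2 by nia.
  have : k1 = -2 \/ k1 = -1 \/ k1 = 0 \/ k1 = 1 \/ k1 = 2 by lia.
  case=> [e|[e|[e|[e|e]]]]; subst k1.
  + have hu0 : (2 * k2 - 0 * (-2)) * (2 * k2 - 0 * (-2)) = (0%N)%:Z by lia.
    case: (sq_root (r0 := 0%N) hu0 isT isT) => hu.
    * have ek2 : k2 = 0 by lia.
      rewrite ek2 in hk2.
      apply: (memU (x := -1) (y := 0)); [by [] | lra | lra].
    * have ek2 : k2 = 0 by lia.
      rewrite ek2 in hk2.
      apply: (memU (x := -1) (y := 0)); [by [] | lra | lra].
  + have hu0 : (2 * k2 - 0 * (-1)) * (2 * k2 - 0 * (-1)) = (24%N)%:Z by lia.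
    case: (sq_root (r0 := 0%N) hu0 isT isT) => hu.
    * by exfalso; move: hu0; rewrite hu; lia.
    * by exfalso; move: hu0; rewrite hu; lia.
  + have hu0 : (2 * k2 - 0 * (0)) * (2 * k2 - 0 * (0)) = (32%N)%:Z by lia.
    case: (sq_root (r0 := 0%N) hu0 isT isT) => hu.
    * by exfalso; move: hu0; rewrite hu; lia.
    * by exfalso; move: hu0; rewrite hu; lia.
  + have hu0 : (2 * k2 - 0 * (1)) * (2 * k2 - 0 * (1)) = (24%N)%:Z by lia.
    case: (sq_root (r0 := 0%N) hu0 isT isT) => hu.
    * by exfalso; move: hu0; rewrite hu; lia.
    * by exfalso; move: hu0; rewrite hu; lia.
  + have hu0 : (2 * k2 - 0 * (2)) * (2 * k2 - 0 * (2)) = (0%N)%:Z by lia.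
    case: (sq_root (r0 := 0%N) hu0 isT isT) => hu.
    * have ek2 : k2 = 0 by lia.
      rewrite ek2 in hk2.
      apply: (memU (x := 1) (y := 0)); [by [] | lra | lra].
    * have ek2 : k2 = 0 by lia.
      rewrite ek2 in hk2.
      apply: (memU (x := 1) (y := 0)); [by [] | lra | lra].
-
  rewrite (_ : Nq 11 = 3) // in hk2.
  have hk1b : -2 <= k1 <= 2 by nia.
  have : k1 = -2 \/ k1 = -1 \/ k1 = 0 \/ k1 = 1 \/ k1 = 2 by lia.
  case=> [e|[e|[e|[e|e]]]]; subst k1.
  + have hu0 : (2 * k2 - 1 * (-2)) * (2 * k2 - 1 * (-2)) = (0%N)%:Z by lia.
    case: (sq_root (r0 := 0%N) hu0 isT isT) => hu.
    * have ek2 : k2 = -1 by lia.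
      rewrite ek2 in hk2.
      apply: (memU (x := -1) (y := 0)); [by [] | lra | lra].
    * have ek2 : k2 = -1 by lia.
      rewrite ek2 in hk2.
      apply: (memU (x := -1) (y := 0)); [by [] | lra | lra].
  + have hu0 : (2 * k2 - 1 * (-1)) * (2 * k2 - 1 * (-1)) = (33%N)%:Z by lia.
    case: (sq_root (r0 := 0%N) hu0 isT isT) => hu.
    * by exfalso; move: hu0; rewrite hu; lia.
    * by exfalso; move: hu0; rewrite hu; lia.
  + have hu0 : (2 * k2 - 1 * (0)) * (2 * k2 - 1 * (0)) = (44%N)%:Z by lia.
    case: (sq_root (r0 := 0%N) hu0 isT isT) => hu.
    * by exfalso; move: hu0; rewrite hu; lia.
    * by exfalso; move: hu0; rewrite hu; lia.
  + have hu0 : (2 * k2 - 1 * (1)) * (2 * k2 - 1 * (1)) = (33%N)%:Z by lia.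
    case: (sq_root (r0 := 0%N) hu0 isT isT) => hu.
    * by exfalso; move: hu0; rewrite hu; lia.
    * by exfalso; move: hu0; rewrite hu; lia.
  + have hu0 : (2 * k2 - 1 * (2)) * (2 * k2 - 1 * (2)) = (0%N)%:Z by lia.
    case: (sq_root (r0 := 0%N) hu0 isT isT) => hu.
    * have ek2 : k2 = 1 by lia.
      rewrite ek2 in hk2.
      apply: (memU (x := 1) (y := 0)); [by [] | lra | lra].
    * have ek2 : k2 = 1 by lia.
      rewrite ek2 in hk2.
      apply: (memU (x := 1) (y := 0)); [by [] | lra | lra].
-
  rewrite (_ : Nq 19 = 5) // in hk2.
  have hk1b : -2 <= k1 <= 2 by nia.
  have : k1 = -2 \/ k1 = -1 \/ k1 = 0 \/ k1 = 1 \/ k1 = 2 by lia.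
  case=> [e|[e|[e|[e|e]]]]; subst k1.
  + have hu0 : (2 * k2 - 1 * (-2)) * (2 * k2 - 1 * (-2)) = (0%N)%:Z by lia.
    case: (sq_root (r0 := 0%N) hu0 isT isT) => hu.
    * have ek2 : k2 = -1 by lia.
      rewrite ek2 in hk2.
      apply: (memU (x := -1) (y := 0)); [by [] | lra | lra].
    * have ek2 : k2 = -1 by lia.
      rewrite ek2 in hk2.
      apply: (memU (x := -1) (y := 0)); [by [] | lra | lra].
  + have hu0 : (2 * k2 - 1 * (-1)) * (2 * k2 - 1 * (-1)) = (57%N)%:Z by lia.
    case: (sq_root (r0 := 0%N) hu0 isT isT) => hu.
    * by exfalso; move: hu0; rewrite hu; lia.
    * by exfalso; move: hu0; rewrite hu; lia.
  + have hu0 : (2 * k2 - 1 * (0)) * (2 * k2 - 1 * (0)) = (76%N)%:Z by lia.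
    case: (sq_root (r0 := 0%N) hu0 isT isT) => hu.
    * by exfalso; move: hu0; rewrite hu; lia.
    * by exfalso; move: hu0; rewrite hu; lia.
  + have hu0 : (2 * k2 - 1 * (1)) * (2 * k2 - 1 * (1)) = (57%N)%:Z by lia.
    case: (sq_root (r0 := 0%N) hu0 isT isT) => hu.
    * by exfalso; move: hu0; rewrite hu; lia.
    * by exfalso; move: hu0; rewrite hu; lia.
  + have hu0 : (2 * k2 - 1 * (2)) * (2 * k2 - 1 * (2)) = (0%N)%:Z by lia.
    case: (sq_root (r0 := 0%N) hu0 isT isT) => hu.
    * have ek2 : k2 = 1 by lia.
      rewrite ek2 in hk2.
      apply: (memU (x := 1) (y := 0)); [by [] | lra | lra].
    * have ek2 : k2 = 1 by lia.
      rewrite ek2 in hk2.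
      apply: (memU (x := 1) (y := 0)); [by [] | lra | lra].
-
  rewrite (_ : Nq 43 = 11) // in hk2.
  have hk1b : -2 <= k1 <= 2 by nia.
  have : k1 = -2 \/ k1 = -1 \/ k1 = 0 \/ k1 = 1 \/ k1 = 2 by lia.
  case=> [e|[e|[e|[e|e]]]]; subst k1.
  + have hu0 : (2 * k2 - 1 * (-2)) * (2 * k2 - 1 * (-2)) = (0%N)%:Z by lia.
    case: (sq_root (r0 := 0%N) hu0 isT isT) => hu.
    * have ek2 : k2 = -1 by lia.
      rewrite ek2 in hk2.
      apply: (memU (x := -1) (y := 0)); [by [] | lra | lra].
    * have ek2 : k2 = -1 by lia.
      rewrite ek2 in hk2.
      apply: (memU (x := -1) (y := 0)); [by [] | lra | lra].
  + have hu0 : (2 * k2 - 1 * (-1)) * (2 * k2 - 1 * (-1)) = (129%N)%:Z by lia.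
    case: (sq_root (r0 := 0%N) hu0 isT isT) => hu.
    * by exfalso; move: hu0; rewrite hu; lia.
    * by exfalso; move: hu0; rewrite hu; lia.
  + have hu0 : (2 * k2 - 1 * (0)) * (2 * k2 - 1 * (0)) = (172%N)%:Z by lia.
    case: (sq_root (r0 := 0%N) hu0 isT isT) => hu.
    * by exfalso; move: hu0; rewrite hu; lia.
    * by exfalso; move: hu0; rewrite hu; lia.
  + have hu0 : (2 * k2 - 1 * (1)) * (2 * k2 - 1 * (1)) = (129%N)%:Z by lia.
    case: (sq_root (r0 := 0%N) hu0 isT isT) => hu.
    * by exfalso; move: hu0; rewrite hu; lia.
    * by exfalso; move: hu0; rewrite hu; lia.
  + have hu0 : (2 * k2 - 1 * (2)) * (2 * k2 - 1 * (2)) = (0%N)%:Z by lia.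
    case: (sq_root (r0 := 0%N) hu0 isT isT) => hu.
    * have ek2 : k2 = 1 by lia.
      rewrite ek2 in hk2.
      apply: (memU (x := 1) (y := 0)); [by [] | lra | lra].
    * have ek2 : k2 = 1 by lia.
      rewrite ek2 in hk2.
      apply: (memU (x := 1) (y := 0)); [by [] | lra | lra].
-
  rewrite (_ : Nq 67 = 17) // in hk2.
  have hk1b : -2 <= k1 <= 2 by nia.
  have : k1 = -2 \/ k1 = -1 \/ k1 = 0 \/ k1 = 1 \/ k1 = 2 by lia.
  case=> [e|[e|[e|[e|e]]]]; subst k1.
  + have hu0 : (2 * k2 - 1 * (-2)) * (2 * k2 - 1 * (-2)) = (0%N)%:Z by lia.
    case: (sq_root (r0 := 0%N) hu0 isT isT) => hu.
    * have ek2 : k2 = -1 by lia.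
      rewrite ek2 in hk2.
      apply: (memU (x := -1) (y := 0)); [by [] | lra | lra].
    * have ek2 : k2 = -1 by lia.
      rewrite ek2 in hk2.
      apply: (memU (x := -1) (y := 0)); [by [] | lra | lra].
  + have hu0 : (2 * k2 - 1 * (-1)) * (2 * k2 - 1 * (-1)) = (201%N)%:Z by lia.
    case: (sq_root (r0 := 0%N) hu0 isT isT) => hu.
    * by exfalso; move: hu0; rewrite hu; lia.
    * by exfalso; move: hu0; rewrite hu; lia.
  + have hu0 : (2 * k2 - 1 * (0)) * (2 * k2 - 1 * (0)) = (268%N)%:Z by lia.
    case: (sq_root (r0 := 0%N) hu0 isT isT) => hu.
    * by exfalso; move: hu0; rewrite hu; lia.
    * by exfalso; move: hu0; rewrite hu; lia.
  + have hu0 : (2 * k2 - 1 * (1)) * (2 * k2 - 1 * (1)) = (201%N)%:Z by lia.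
    case: (sq_root (r0 := 0%N) hu0 isT isT) => hu.
    * by exfalso; move: hu0; rewrite hu; lia.
    * by exfalso; move: hu0; rewrite hu; lia.
  + have hu0 : (2 * k2 - 1 * (2)) * (2 * k2 - 1 * (2)) = (0%N)%:Z by lia.
    case: (sq_root (r0 := 0%N) hu0 isT isT) => hu.
    * have ek2 : k2 = 1 by lia.
      rewrite ek2 in hk2.
      apply: (memU (x := 1) (y := 0)); [by [] | lra | lra].
    * have ek2 : k2 = 1 by lia.
      rewrite ek2 in hk2.
      apply: (memU (x := 1) (y := 0)); [by [] | lra | lra].
-
  rewrite (_ : Nq 163 = 41) // in hk2.
  have hk1b : -2 <= k1 <= 2 by nia.
  have : k1 = -2 \/ k1 = -1 \/ k1 = 0 \/ k1 = 1 \/ k1 = 2 by lia.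
  case=> [e|[e|[e|[e|e]]]]; subst k1.
  + have hu0 : (2 * k2 - 1 * (-2)) * (2 * k2 - 1 * (-2)) = (0%N)%:Z by lia.
    case: (sq_root (r0 := 0%N) hu0 isT isT) => hu.
    * have ek2 : k2 = -1 by lia.
      rewrite ek2 in hk2.
      apply: (memU (x := -1) (y := 0)); [by [] | lra | lra].
    * have ek2 : k2 = -1 by lia.
      rewrite ek2 in hk2.
      apply: (memU (x := -1) (y := 0)); [by [] | lra | lra].
  + have hu0 : (2 * k2 - 1 * (-1)) * (2 * k2 - 1 * (-1)) = (489%N)%:Z by lia.
    case: (sq_root (r0 := 0%N) hu0 isT isT) => hu.
    * by exfalso; move: hu0; rewrite hu; lia.
    * by exfalso; move: hu0; rewrite hu; lia.
  + have hu0 : (2 * k2 - 1 * (0)) * (2 * k2 - 1 * (0)) = (652%N)%:Z by lia.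
    case: (sq_root (r0 := 0%N) hu0 isT isT) => hu.
    * by exfalso; move: hu0; rewrite hu; lia.
    * by exfalso; move: hu0; rewrite hu; lia.
  + have hu0 : (2 * k2 - 1 * (1)) * (2 * k2 - 1 * (1)) = (489%N)%:Z by lia.
    case: (sq_root (r0 := 0%N) hu0 isT isT) => hu.
    * by exfalso; move: hu0; rewrite hu; lia.
    * by exfalso; move: hu0; rewrite hu; lia.
  + have hu0 : (2 * k2 - 1 * (2)) * (2 * k2 - 1 * (2)) = (0%N)%:Z by lia.
    case: (sq_root (r0 := 0%N) hu0 isT isT) => hu.
    * have ek2 : k2 = 1 by lia.
      rewrite ek2 in hk2.
      apply: (memU (x := 1) (y := 0)); [by [] | lra | lra].
    * have ek2 : k2 = 1 by lia.
      rewrite ek2 in hk2.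
      apply: (memU (x := 1) (y := 0)); [by [] | lra | lra].
Qed.

Lemma units_card q : admissible_q q -> has_card (OK_unit q) (2 * size (stabl q))%N.
Proof.
move=> hq; exists (U q); split; first exact: U_uniq.
split; last exact: size_U.
move=> x; split; first exact: U_unit.
exact: OK_unit_in.
Qed.

Theorem lemma2p3 (q : nat) (hq : admissible_q q) :
  exists n : nat,
    has_card (Stab q) n /\
    (forall w : CC, (exists g, phi q g = w) ->
        has_card (fun g => phi q g = w) n) /\
    has_card (OK_unit q) (2 * n)%N.
Proof.
exists (size (stabl q)); split; first exact: stab_card.
split; last exact: units_card.
by move=> w; apply: phi_card.
Qed.
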